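(* Let $K_2\le 61440$ be the universal constant of the following statement: for all independent real random variables $X_1,\dots,X_n$ with finite second moments, $E=\mathbb{E}\sum_i X_i$, $V=\operatorname{Var}\sum_i X_i$, $V+E^2>0$, there is $k$ with $\operatorname{Var}|\sum_i X_i| \ge V\operatorname{Var}(\sum_{i\ne k}X_i)/(K_2(V+E^2))$. Let $f\colon\{\pm1\}^m\to\{\pm1\}$, let $I_1,\dots,I_n$ be a partition of $[m]=\{1,\dots,m\}$, and for each $j$ let $f_j = \sum_{\emptyset\neq S\subseteq I_j}\hat f(S)\chi_S$. Let $\epsilon\ge 0$ and suppose \[ \sum_{S\colon \exists j,\ S\subseteq I_j} \hat f(S)^2 \;\ge\; 1-\epsilon\cdot\operatorname{Var} f. \] Then there exists $k\in[n]$ such that \[ \big\| f - f_k - \hat f(\emptyset)\big\|_2^2 \;\le\; (K_2+2)\,\epsilon . \]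
   Context: $\{\pm1\}^m$ carries the uniform probability measure. For $S\subseteq[m]$, $\chi_S(x)=\prod_{i\in S}x_i$ (with $\chi_\emptyset=1$), and $\hat f(S)=\mathbb{E}[f\chi_S]$ is the Fourier coefficient, so $f=\sum_S \hat f(S)\chi_S$. $\|g\|_2^2=\mathbb{E}[g^2]$ and $\operatorname{Var} f=\mathbb{E}[f^2]-(\mathbb{E}f)^2=\sum_{S\ne\emptyset}\hat f(S)^2$. The sum in the hypothesis includes $S=\emptyset$. *)

(* Defs.v *)
From HB Require Import structures.
From mathcomp Require Import all_boot all_order all_algebra.
Set Implicit Arguments. Unset Strict Implicit. Unset Printing Implicit Defensive.
Import Order.TTheory GRing.Theory Num.Theory.
Local Open Scope ring_scope.

(* n independent real random variables X_0..X_{n-1}: X_i takes value x i t with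
   probability p i t, t ranging over a finite type T. *)
Section RV.
Variables (R : realFieldType) (n : nat) (T : finType).
Variables (p x : 'I_n -> T -> R).

Definition is_prob_family : Prop :=
  (forall i t, 0 <= p i t) /\ (forall i, \sum_(t : T) p i t = 1).

Definition jointPr (w : {ffun 'I_n -> T}) : R := \prod_(i < n) p i (w i).

Definition rvE (g : {ffun 'I_n -> T} -> R) : R :=
  \sum_(w : {ffun 'I_n -> T}) jointPr w * g w.

Definition rvVar (g : {ffun 'I_n -> T} -> R) : R :=
  rvE (fun w => g w ^+ 2) - (rvE g) ^+ 2.

Definition rvSum (w : {ffun 'I_n -> T}) : R := \sum_(i < n) x i (w i).
Definition rvSumExcept (k : 'I_n) (w : {ffun 'I_n -> T}) : R :=
  \sum_(i < n | i != k) x i (w i).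
End RV.

Definition K2_property (R : realFieldType) (K2 : R) : Prop :=
  forall (n : nat) (T : finType) (p x : 'I_n -> T -> R),
    is_prob_family p ->
    let E := rvE p (rvSum x) in
    let V := rvVar p (rvSum x) in
    0 < V + E ^+ 2 ->
    exists k : 'I_n,
      V * rvVar p (rvSumExcept x k) / (K2 * (V + E ^+ 2))
        <= rvVar p (fun w => `|rvSum x w|).

(* The cube {±1}^m is encoded as {ffun 'I_m -> bool}; coordinate i of a point
   w is sgnb (w i) (false ↦ 1, true ↦ -1).  Coordinates are 0-based. *)
Definition cube (m : nat) := {ffun 'I_m -> bool}.

Definition sgnb (R : realFieldType) (b : bool) : R := if b then -1 else 1.

Definition cubeE (R : realFieldType) (m : nat) (g : cube m -> R) : R :=
  (\sum_(w : cube m) g w) / (2 ^+ m).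

Definition cubeVar (R : realFieldType) (m : nat) (g : cube m -> R) : R :=
  cubeE (fun w => g w ^+ 2) - (cubeE g) ^+ 2.

Definition chi (R : realFieldType) (m : nat) (S : {set 'I_m}) (w : cube m) : R :=
  \prod_(i in S) sgnb R (w i).

Definition fhat (R : realFieldType) (m : nat) (f : cube m -> R) (S : {set 'I_m}) : R :=
  cubeE (fun w => f w * chi R S w).

Definition fpart (R : realFieldType) (m : nat) (f : cube m -> R) (I : {set 'I_m})
  (w : cube m) : R :=
  \sum_(S : {set 'I_m} | (S != set0) && (S \subset I)) fhat f S * chi R S w.

Definition is_partition (m n : nat) (I : 'I_n -> {set 'I_m}) : Prop :=
  (forall j, I j != set0) /\
  (forall j k, j != k -> [disjoint I j & I k]) /\
  (\bigcup_(j < n) I j = [set: 'I_m]).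

(* Main.v *)
Require Import Defs.
From HB Require Import structures.
From mathcomp Require Import all_boot all_order all_algebra ring lra.
Import Order.TTheory GRing.Theory Num.Theory.
Local Open Scope ring_scope.
Set Implicit Arguments. Unset Strict Implicit.

Section Cube.
Variables (R : realFieldType) (m : nat).
Implicit Types (g h : cube m -> R).

Definition N : R := 2 ^+ m.
Lemma N_gt0 : 0 < N. Proof. by rewrite /N exprn_gt0 // ltr0n. Qed.
Lemma N_neq0 : N != 0. Proof. by rewrite gt_eqF // N_gt0. Qed.

Lemma card_cube : #|{: cube m}| = (2 ^ m)%N.
Proof. by rewrite card_ffun card_bool card_ord. Qed.

Lemma sum_const_cube (a : R) : \sum_(w : cube m) a = a * N.
Proof. by rewrite sumr_const card_cube -mulr_natr natrX. Qed.

Lemma cubeE_const (a : R) : cubeE (fun _ : cube m => a) = a.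
Proof. by rewrite /cubeE sum_const_cube mulfK // N_neq0. Qed.

Lemma cubeE_add g h : cubeE (fun w => g w + h w) = cubeE g + cubeE h.
Proof. by rewrite /cubeE big_split /= mulrDl. Qed.

Lemma cubeE_opp g : cubeE (fun w => - g w) = - cubeE g.
Proof. by rewrite /cubeE sumrN mulNr. Qed.

Lemma cubeE_sub g h : cubeE (fun w => g w - h w) = cubeE g - cubeE h.
Proof. by rewrite cubeE_add cubeE_opp. Qed.

Lemma cubeE_scale (a : R) g : cubeE (fun w => a * g w) = a * cubeE g.
Proof. by rewrite /cubeE -mulr_sumr mulrA. Qed.

Lemma cubeE_sum (I : Type) (r : seq I) (P : pred I) (F : I -> cube m -> R) :
  cubeE (fun w => \sum_(i <- r | P i) F i w) = \sum_(i <- r | P i) cubeE (F i).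
Proof. by rewrite /cubeE exchange_big /= mulr_suml. Qed.

Lemma cubeE_le g h : (forall w, g w <= h w) -> cubeE g <= cubeE h.
Proof.
move=> H; rewrite /cubeE ler_wpM2r //.
  by rewrite invr_ge0 ltW // N_gt0.
by apply: ler_sum => w _; apply: H.
Qed.

Lemma cubeE_ext g h : (forall w, g w = h w) -> cubeE g = cubeE h.
Proof. by move=> H; rewrite /cubeE; congr (_ / _); apply: eq_bigr => w _. Qed.

Lemma cubeE_ge0 g : (forall w, 0 <= g w) -> 0 <= cubeE g.
Proof. by move=> H; rewrite -(cubeE_const 0); apply: cubeE_le. Qed.

Lemma cubeVar_shift g (d : R) : cubeVar (fun w => g w + d) = cubeVar g.
Proof.
rewrite /cubeVar.
rewrite (cubeE_ext (g := fun w => (g w + d) ^+ 2)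
   (h := fun w => g w ^+ 2 + (2 * d * g w + d ^+ 2))); last by move=> w; ring.
rewrite !cubeE_add cubeE_scale !cubeE_const; ring.
Qed.

Lemma var_le_dev g : cubeVar g <= cubeE (fun w => (g w - 1) ^+ 2).
Proof.
rewrite /cubeVar.
rewrite (cubeE_ext (g := fun w => (g w - 1) ^+ 2)
   (h := fun w => g w ^+ 2 + (-2 * g w + 1))); last by move=> w; ring.
rewrite cubeE_add cubeE_add cubeE_scale cubeE_const.
have := sqr_ge0 (cubeE g - 1); nra.
Qed.

Definition flip (a : 'I_m) (w : cube m) : cube m :=
  [ffun b => if b == a then ~~ w b else w b].

Lemma flipK a : involutive (flip a).
Proof.
move=> w; apply/ffunP => b; rewrite !ffunE.
by case: eqP => // ->; rewrite negbK.
Qed.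

Lemma sgnbN (b : bool) : sgnb R (~~ b) = - sgnb R b.
Proof. by case: b; rewrite /sgnb ?opprK. Qed.

Lemma chi_flip (S : {set 'I_m}) a w :
  chi R S (flip a w) = (if a \in S then -1 else 1) * chi R S w.
Proof.
rewrite /chi; case: (boolP (a \in S)) => Ha.
  rewrite (bigD1 a Ha) [in RHS](bigD1 a Ha) /= ffunE eqxx sgnbN mulrA mulN1r mulNr.
  rewrite -mulNr; congr (_ * _); apply: eq_bigr => i /andP[_ Hi].
  by rewrite ffunE (negbTE Hi).
rewrite mul1r; apply: eq_bigr => i Hi; rewrite ffunE.
by case: eqP => // Hia; rewrite -Hia Hi in Ha.
Qed.

Lemma chi0 (w : cube m) : chi R set0 w = 1.
Proof. by rewrite /chi big_set0. Qed.

Lemma sgnb_sq (b : bool) : sgnb R b * sgnb R b = 1.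
Proof. by case: b; rewrite /sgnb ?mulrNN mulr1. Qed.

Lemma cube_orth (S T : {set 'I_m}) :
  cubeE (fun w => chi R S w * chi R T w) = if S == T then 1 else 0.
Proof.
case: eqP => [<-|/eqP neqST].
  rewrite -(cubeE_const 1); apply: cubeE_ext => w.
  by rewrite /chi -big_split /=; apply: big1 => i _; rewrite sgnb_sq.
have [a Ha] : exists a, (a \in S) != (a \in T).
  apply/existsP; apply: contraNT neqST => /existsPn H; apply/eqP/setP => a.
  by have := H a; rewrite negbK => /eqP.
rewrite /cubeE.
set X := \sum_(w : cube m) _.
suff HX : X = - X.
  have -> : X = 0 by lra.
  by rewrite mul0r.
rewrite {1}/X (reindex_inj (inv_inj (flipK a))) /= -sumrN.
apply: eq_bigr => w _; rewrite !chi_flip.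
by move: Ha; case: (a \in S); case: (a \in T) => //= _; ring.
Qed.

Lemma cubeE_chi (S : {set 'I_m}) :
  cubeE (chi R S) = if S == set0 then 1 else 0.
Proof.
by rewrite -cube_orth; apply: cubeE_ext => w; rewrite chi0 mulr1.
Qed.

Definition Lc (al : {set 'I_m} -> R) (w : cube m) : R :=
  \sum_(S : {set 'I_m}) al S * chi R S w.

Lemma cubeE_LcLc al be :
  cubeE (fun w => Lc al w * Lc be w) = \sum_S al S * be S.
Proof.
rewrite (cubeE_ext (h := fun w => \sum_S \sum_T
   (al S * be T) * (chi R S w * chi R T w))); last first.
  move=> w; rewrite /Lc mulr_suml; apply: eq_bigr => S _.
  rewrite mulr_sumr; apply: eq_bigr => T _; ring.
rewrite cubeE_sum; apply: eq_bigr => S _.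
rewrite cubeE_sum (bigD1 S) //= cubeE_scale cube_orth eqxx mulr1 big1 ?addr0 //.
by move=> T HT; rewrite cubeE_scale cube_orth eq_sym (negbTE HT) mulr0.
Qed.

Lemma cubeE_Lc al : cubeE (Lc al) = al set0.
Proof.
rewrite cubeE_sum (bigD1 set0) //= cubeE_scale cubeE_chi eqxx mulr1 big1 ?addr0 //.
by move=> T HT; rewrite cubeE_scale cubeE_chi (negbTE HT) mulr0.
Qed.

Variable f : cube m -> R.
Lemma cubeE_fLc be : cubeE (fun w => f w * Lc be w) = \sum_S fhat f S * be S.
Proof.
rewrite (cubeE_ext (h := fun w => \sum_S be S * (f w * chi R S w))); last first.
  by move=> w; rewrite /Lc mulr_sumr; apply: eq_bigr => S _; ring.
rewrite cubeE_sum; apply: eq_bigr => S _; rewrite cubeE_scale /fhat; ring.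
Qed.

Definition Lq (Q : pred {set 'I_m}) := Lc (fun S => if Q S then fhat f S else 0).
Definition sq (Q : pred {set 'I_m}) := \sum_S (if Q S then fhat f S ^+ 2 else 0).

Hypothesis f_pm1 : forall w, f w = 1 \/ f w = -1.

Lemma cubeE_f2 : cubeE (fun w => f w ^+ 2) = 1.
Proof.
rewrite -(cubeE_const 1); apply: cubeE_ext => w.
by case: (f_pm1 w) => ->; rewrite ?sqrrN expr1n.
Qed.

Lemma dev_Lq Q : cubeE (fun w => (f w - Lq Q w) ^+ 2) = 1 - sq Q.
Proof.
rewrite (cubeE_ext (h := fun w => f w ^+ 2 + (-2 * (f w * Lq Q w)
        + Lq Q w * Lq Q w))); last by move=> w; ring.
rewrite !cubeE_add cubeE_scale cubeE_f2 cubeE_fLc cubeE_LcLc /sq.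
rewrite mulr_sumr -big_split /=; congr (_ + _).
rewrite -sumrN; apply: eq_bigr => S _; case: (Q S); ring.
Qed.
End Cube.

Section Transfer.
Variables (R : realFieldType) (m n : nat) (I : 'I_n -> {set 'I_m}).
Hypothesis HI : is_partition I.

Definition phi (w : {ffun 'I_n -> cube m}) : cube m :=
  [ffun a => if [pick j | a \in I j] is Some j then w j a else false].

Lemma in_some_block a : exists j, a \in I j.
Proof.
have : a \in [set: 'I_m] by rewrite inE.
by case: HI => _ [_ <-] /bigcupP [j _ Hj]; exists j.
Qed.

Lemma phi_in i a w : a \in I i -> phi w a = w i a.
Proof.
move=> Ha; rewrite ffunE; case: pickP => [j Hj|Hn]; last by rewrite Hn in Ha.
case: (eqVneq j i) => [-> //|Hji].
by case: HI => _ [Hd _]; rewrite (disjointFr (Hd _ _ Hji) Hj) in Ha.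
Qed.

Definition xorf (u v : cube m) : cube m := [ffun a => u a (+) v a].
Definition psi (u : cube m) (w : {ffun 'I_n -> cube m}) : {ffun 'I_n -> cube m} :=
  [ffun i => xorf (w i) u].

Lemma psiK u : involutive (psi u).
Proof. by move=> w; apply/ffunP => i; apply/ffunP => a; rewrite !ffunE addbK. Qed.

Lemma xorfK u : involutive (xorf u).
Proof. by move=> v; apply/ffunP => a; rewrite !ffunE addKb. Qed.

Lemma phi_psi u w : phi (psi u w) = xorf (phi w) u.
Proof.
apply/ffunP => a; rewrite !ffunE; case: pickP => [j Hj|Hn].
  by rewrite !ffunE.
by have [j Hj] := in_some_block a; rewrite Hn in Hj.
Qed.

Definition punif (_ : 'I_n) (_ : cube m) : R := (N R m)^-1.

Lemma punif_prob : is_prob_family punif.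
Proof.
split=> [i t|i]; first by rewrite /punif invr_ge0 ltW // N_gt0.
by rewrite /punif sum_const_cube mulVf // N_neq0.
Qed.

Lemma transfer (F : cube m -> R) :
  rvE punif (fun w => F (phi w)) = cubeE F.
Proof.
rewrite /rvE /jointPr /punif.
under eq_bigr => w _ do rewrite prodr_const card_ord.
rewrite -mulr_sumr.
set Z := \sum_w F (phi w).
have HZ : Z * N R m = (N R m) ^+ n * \sum_v F v.
  rewrite -sum_const_cube.
  transitivity (\sum_(u : cube m) \sum_w F (xorf (phi w) u)).
    apply: eq_bigr => u _; rewrite /Z (reindex_inj (inv_inj (psiK u))) /=.
    by apply: eq_bigr => w _; rewrite phi_psi.
  rewrite exchange_big /=.
  transitivity (\sum_(w : {ffun 'I_n -> cube m}) \sum_v F v).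
    by apply: eq_bigr => w _; rewrite [in RHS](reindex_inj (inv_inj (xorfK (phi w)))).
  by rewrite sumr_const card_ffun card_cube card_ord -mulr_natl natrX natrX.
have -> : Z = (N R m) ^+ n * (\sum_v F v) / N R m.
  by apply: (mulIf (N_neq0 R m)); rewrite HZ divfK // N_neq0.
rewrite /cubeE exprVn mulrA mulrA mulVf ?mul1r //.
by rewrite expf_neq0 // N_neq0.
Qed.
End Transfer.
Lemma final_alg (R : realFieldType) (K2 eps c2 s u Y : R) :
  0 < K2 -> 0 <= eps -> 0 <= c2 -> c2 <= u -> u <= s -> s <= 1 ->
  1 - eps * (1 - c2) <= s -> Y <= 1 - s ->
  (0 < s -> (s - c2) * (s - u) / (K2 * s) <= Y) -> 1 - u <= (K2 + 2) * eps.
Proof.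
move=> K2p e0 c0 cu us s1 Hs HY HK.
case: (lerP 1 ((K2 + 2) * eps)) => H; first by lra.
have e1 : eps < 1 by nra.
have es : eps * (1 - c2) <= eps by nra.
have s0 : 0 < s by lra.
have := HK s0; rewrite ler_pdivrMr ?mulr_gt0 // => HK'.
case: (eqVneq c2 1) => [c21|cn1].
  rewrite c21 in cu; have -> : u = 1 by lra.
  by rewrite subrr mulr_ge0 // ?addr_ge0 ?ltW.
have sg : 0 < 1 - c2 by lra.
have h0 : Y * (K2 * s) <= (1 - s) * (K2 * s).
  by rewrite ler_wpM2r // mulr_ge0 // ltW.
have h0' : (1 - s) * (K2 * s) <= (1 - s) * K2.
  rewrite ler_wpM2l ?subr_ge0 //; rewrite -[X in _ <= X]mulr1 ler_wpM2l // ltW //.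
have h1 : Y * (K2 * s) <= (1 - s) * K2 by lra.
have h2 : (1 - s) * K2 <= eps * (1 - c2) * K2.
  apply: ler_wpM2r; [exact: ltW | lra].
have h3 : (1 - c2) * (1 - eps) * (s - u) <= (s - c2) * (s - u).
  have -> : (1 - c2) * (1 - eps) = 1 - c2 - eps * (1 - c2) by ring.
  apply: ler_wpM2r; lra.
have h4 : (1 - c2) * ((1 - eps) * (s - u)) <= (1 - c2) * (eps * K2) by nra.
have h5 : (1 - eps) * (s - u) <= eps * K2.
  by move: h4; rewrite ler_pM2l.
have h6 : eps * (s - u) <= eps by nra.
nra.
Qed.

Section More.
Variables (R : realFieldType) (m : nat) (f : cube m -> R).

Lemma Lq_mul Q Q' : cubeE (fun w => Lq f Q w * Lq f Q' w) = sq f (fun S => Q S && Q' S).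
Proof.
rewrite cubeE_LcLc /sq; apply: eq_bigr => S _.
by case: (Q S); case: (Q' S) => /=; rewrite ?mul0r ?mulr0 ?expr2.
Qed.

Lemma Lq_sq Q : cubeE (fun w => Lq f Q w ^+ 2) = sq f Q.
Proof.
rewrite (cubeE_ext (h := fun w => Lq f Q w * Lq f Q w)); last by move=> w; rewrite expr2.
by rewrite Lq_mul /sq; apply: eq_bigr => S _; rewrite andbb.
Qed.

Lemma cubeE_Lq Q : cubeE (Lq f Q) = if Q set0 then fhat f set0 else 0.
Proof. by rewrite cubeE_Lc. Qed.

Lemma cubeE_f : cubeE f = fhat f set0.
Proof. by rewrite /fhat; apply: cubeE_ext => w; rewrite chi0 mulr1. Qed.

Lemma sq_le (Q Q' : pred {set 'I_m}) : (forall S, Q S -> Q' S) -> sq f Q <= sq f Q'.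
Proof.
move=> H; apply: ler_sum => S _; case: ifP => HQ; first by rewrite H.
by case: ifP => // _; rewrite sqr_ge0.
Qed.

Lemma sq_ext (Q Q' : pred {set 'I_m}) : (forall S, Q S = Q' S) -> sq f Q = sq f Q'.
Proof. by move=> H; apply: eq_bigr => S _; rewrite H. Qed.

Lemma sq_ge_0 (Q : pred {set 'I_m}) : Q set0 -> fhat f set0 ^+ 2 <= sq f Q.
Proof.
move=> H; rewrite /sq (bigD1 set0) //= H lerDl.
by apply: sumr_ge0 => S _; case: ifP => // _; rewrite sqr_ge0.
Qed.

Lemma Lq_block (J : {set 'I_m}) w :
  Lq f (fun S => S \subset J) w = fpart f J w + fhat f set0.
Proof.
rewrite /Lq /Lc (bigD1 set0) //= sub0set chi0 mulr1 addrC; congr (_ + _).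
rewrite /fpart big_mkcondr /=; apply: eq_bigr => S _.
by case: ifP => // _; rewrite mul0r.
Qed.

Lemma fpart_phi n (I : 'I_n -> {set 'I_m}) (HI : is_partition I) i (w : {ffun 'I_n -> cube m}) :
  fpart f (I i) (w i) = fpart f (I i) (phi I w).
Proof.
apply: eq_bigr => S /andP[_ HS]; congr (_ * _); apply: eq_bigr => a Ha.
by rewrite (phi_in HI (i := i)) // (subsetP HS).
Qed.

Lemma sum_fpart n (I : 'I_n -> {set 'I_m}) (HI : is_partition I) (j0 : 'I_n) w :
  \sum_i fpart f (I i) w + fhat f set0 = Lq f (fun S => [exists j, S \subset I j]) w.
Proof.
rewrite /fpart.
under eq_bigr => i _ do rewrite big_mkcond /=.
rewrite exchange_big /=.
have -> : fhat f set0 = \sum_S (if S == set0 then fhat f S * chi R S w else 0).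
  by rewrite -big_mkcond big_pred1_eq chi0 mulr1.
rewrite -big_split; apply: eq_bigr => S _.
case: (eqVneq S set0) => [->|nS].
  rewrite big1 //= add0r.
  have -> : [exists j, set0 \subset I j] by apply/existsP; exists j0; exact: sub0set.
  by [].
rewrite Monoid.mulm1 /=.
case: existsP => [[j Hj]|Hn].
  rewrite (bigD1 j) //= Hj big1 ?addr0 // => i Hij.
  case: ifP => // HSi; exfalso.
  have : S \subset I i :&: I j by rewrite subsetI HSi Hj.
  case: HI => _ [Hd _]; rewrite (disjoint_setI0 (Hd _ _ Hij)) subset0 => HS.
  by rewrite HS in nS.
rewrite mul0r; apply: big1 => i _; case: ifP => // HSi; exfalso; apply: Hn.
by exists i.
Qed.
End More.

Lemma transfer_ext (R : realFieldType) m n (I : 'I_n -> {set 'I_m}) (HI : is_partition I)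
  (g : {ffun 'I_n -> cube m} -> R) (F : cube m -> R) :
  (forall w, g w = F (phi I w)) -> rvE (@punif R m n) g = cubeE F.
Proof.
by move=> H; rewrite -(transfer HI) /rvE; apply: eq_bigr => w _; rewrite H.
Qed.

Lemma transferVar (R : realFieldType) m n (I : 'I_n -> {set 'I_m}) (HI : is_partition I)
  (g : {ffun 'I_n -> cube m} -> R) (F : cube m -> R) :
  (forall w, g w = F (phi I w)) -> rvVar (@punif R m n) g = cubeVar F.
Proof.
move=> H; rewrite /rvVar /cubeVar (transfer_ext HI H).
by rewrite (transfer_ext HI (g := fun w => g w ^+ 2) (F := fun v => F v ^+ 2)) // => w; rewrite H.
Qed.

Theorem corollary2 (R : realFieldType) (K2 : R)
  (K2_pos : 0 < K2) (HK2 : K2_property K2)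
  (m n : nat) (f : cube m -> R)
  (f_pm1 : forall w, f w = 1 \/ f w = -1)
  (I : 'I_n -> {set 'I_m}) (HI : is_partition I)
  (eps : R) (eps_ge0 : 0 <= eps)
  (Hsum : \sum_(S : {set 'I_m} | [exists j, S \subset I j]) fhat f S ^+ 2
            >= 1 - eps * cubeVar f) :
  exists k : 'I_n,
    cubeE (fun w => (f w - fpart f (I k) w - fhat f set0) ^+ 2) <= (K2 + 2) * eps.
Proof.
case: n I HI Hsum => [|n'] I HI Hsum.
  exfalso.
  case: m f f_pm1 I HI Hsum => [|m'] f f_pm1 I HI Hsum; last first.
    by have [[j Hj] _] := in_some_block HI (ord0 : 'I_m'.+1).
  rewrite big_pred0 in Hsum; last by move=> S; apply/existsP => -[[j Hj]].
  have Hvar : cubeVar f = 0.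
    pose w0 : cube 0 := [ffun i : 'I_0 => false].
    have Ew : forall g : cube 0 -> R, cubeE g = g w0.
      move=> g; rewrite -(@cubeE_const R 0 (g w0)); apply: cubeE_ext => w.
      by congr g; apply/ffunP => -[i Hi].
    by rewrite /cubeVar !Ew subrr.
  rewrite Hvar mulr0 subr0 in Hsum; lra.
pose c := fhat f set0.
pose Bq := fun S : {set 'I_m} => [exists j, S \subset I j].
pose Uk := fun (k : 'I_n'.+1) (S : {set 'I_m}) => S \subset I k.
have HP : forall w, \sum_i fpart f (I i) w + c = Lq f Bq w.
  by move=> w; apply: (sum_fpart f HI ord0).
pose d := c / (n'.+1)%:R.
pose x := fun (i : 'I_n'.+1) (t : cube m) => fpart f (I i) t + d.
have HK := HK2 _ _ (@punif R m n'.+1) x (@punif_prob R m n'.+1).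
simpl in HK.
have Hrs : forall w, rvSum x w = Lq f Bq (phi I w).
  move=> w; rewrite /rvSum /x big_split /= sumr_const card_ord -HP.
  congr (_ + _); first by apply: eq_bigr => i _; apply: fpart_phi.
  by rewrite /d -[X in X = _]mulr_natr divfK // pnatr_eq0.
have Hre : forall k w, rvSumExcept x k w =
    (Lq f Bq (phi I w) - Lq f (Uk k) (phi I w)) + \sum_(i < n'.+1 | i != k) d.
  move=> k w; rewrite /rvSumExcept /x big_split /=; congr (_ + _).
  under eq_bigr => i _ do rewrite (fpart_phi f HI).
  rewrite -HP Lq_block [in RHS](bigD1 k) //= /c; ring.
have Bq0 : Bq set0 by apply/existsP; exists ord0; exact: sub0set.
have Uk0 : forall k, Uk k set0 by move=> k; exact: sub0set.
have UB : forall k S, Uk k S -> Bq S by move=> k S H; apply/existsP; exists k.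
have EV : rvE (@punif R m n'.+1) (rvSum x) = c.
  by rewrite (transfer_ext HI Hrs) cubeE_Lq Bq0.
have VV : rvVar (@punif R m n'.+1) (rvSum x) = sq f Bq - c ^+ 2.
  by rewrite (transferVar HI Hrs) /cubeVar Lq_sq cubeE_Lq Bq0.
have WV : forall k, rvVar (@punif R m n'.+1) (rvSumExcept x k) = sq f Bq - sq f (Uk k).
  move=> k; rewrite (transferVar HI (F := fun v => (Lq f Bq v - Lq f (Uk k) v) + \sum_(i < n'.+1 | i != k) d) (Hre k)).
  rewrite (cubeVar_shift (fun v => Lq f Bq v - Lq f (Uk k) v)) /cubeVar.
  rewrite cubeE_sub !cubeE_Lq Bq0 Uk0 subrr expr0n /= subr0.
  rewrite (cubeE_ext (h := fun w => Lq f Bq w ^+ 2 + (-2 * (Lq f Bq w * Lq f (Uk k) w)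
     + Lq f (Uk k) w ^+ 2))); last by move=> w; ring.
  rewrite !cubeE_add cubeE_scale !Lq_sq Lq_mul.
  rewrite (@sq_ext R m f (fun S => Bq S && Uk k S) (Uk k)); first ring.
  by move=> S; case H: (Uk k S); rewrite ?andbT ?andbF // (UB k S H).
have YV : rvVar (@punif R m n'.+1) (fun w => `|rvSum x w|) <= 1 - sq f Bq.
  rewrite (transferVar HI (F := fun v => `|Lq f Bq v|)); last by move=> w; rewrite Hrs.
  apply: le_trans (var_le_dev _) _.
  rewrite -(dev_Lq f_pm1); apply: cubeE_le => v.
  have H1 := ler_dist_dist (Lq f Bq v) (f v).
  have Hf : `|f v| = 1 by case: (f_pm1 v) => ->; rewrite ?normrN normr1.
  rewrite Hf in H1.
  rewrite -(real_normK (num_real (`|_| - 1))) -(real_normK (num_real (f v - _))).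
  rewrite [`|f v - _|]distrC; have := normr_ge0 (`|Lq f Bq v| - 1); nra.
have Goal : forall k, cubeE (fun w => (f w - fpart f (I k) w - c) ^+ 2) = 1 - sq f (Uk k).
  move=> k; rewrite -(dev_Lq f_pm1); apply: cubeE_ext => w; rewrite Lq_block /c; congr (_ ^+ 2); ring.
have Hvarf : cubeVar f = 1 - c ^+ 2 by rewrite /cubeVar cubeE_f2 // cubeE_f.
have Hs : 1 - eps * (1 - c ^+ 2) <= sq f Bq.
  by rewrite -Hvarf; move: Hsum; rewrite big_mkcond.
have s1 : sq f Bq <= 1.
  rewrite -subr_ge0 -(dev_Lq f_pm1); apply: cubeE_ge0 => w; exact: sqr_ge0.
have c0 : 0 <= c ^+ 2 by exact: sqr_ge0.
case: (ltrP 0 (sq f Bq)) => s0.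
  have [|k Hk] := HK; first by rewrite VV EV subrK.
  exists k; rewrite Goal.
  apply: (final_alg K2_pos eps_ge0 c0 (sq_ge_0 f (Uk0 k)) (sq_le f (UB k)) s1 Hs YV).
  by move=> _; move: Hk; rewrite VV EV WV subrK.
exists ord0; rewrite Goal.
apply: (final_alg K2_pos eps_ge0 c0 (sq_ge_0 f (Uk0 ord0)) (sq_le f (UB ord0)) s1 Hs YV).
by move=> h; exfalso; lra.
Qed.
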